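(* Couple the original redundancy system and the UB system described in the context so that they have the same arrival instants, types and job sizes, and assume $N_c(0)=N_c^{UB}(0)$ and $a_{cjs}(0)=a^{UB}_{cjs}(0)$ for all $c,j,s$. Then $N_c(t)\le N_c^{UB}(t)$ and $a_{cjs}(t)\ge a^{UB}_{cjs}(t)$ for all $c,j,s$ and all $t\ge0$.
   Context: Model: $K$ parallel servers $S=\{1,\ldots,K\}$ with capacities $\mu_k>0$, each serving its own queue by Processor Sharing (with $M_k$ copies present, each copy at server $k$ receives rate $\mu_k/M_k$). Jobs arrive by a Poisson process; each job independently is of type $c\subseteq S$ with probability $p_c$; $\mathcal C=\{c:p_c>0\}$, $\mathcal C(s)=\{c\in\mathcal C:s\in c\}$. Original (redundancy) system: a type-$c$ job sends identical copies (same size $b_{cj}$ for the $j$th type-$c$ job) to all servers of $c$ and departs as soon as one copy completes, the others being removed. Subsystems: $S_1=S$, $\mathcal C_1=\mathcal C$, $\mathcal C_i(s)=\mathcal C_i\cap\mathcal C(s)$, $\mathcal L_i=\arg\max_{s\in S_i}\frac{\mu_s}{\sum_{c\in\mathcal C_i(s)}p_c}$, $S_{i+1}=S\setminus\bigcup_{l\le i}\mathcal L_l$, $\mathcal C_{i+1}=\{c\in\mathcal C:c\subseteq S_{i+1}\}$; $\mathcal R(c)=\{s:\exists i,\ c\in\mathcal C_i(s),\ s\in\mathcal L_i\}$. UB system: same, except a type-$c$ job departs only when all its copies at servers in $\mathcal R(c)$ are fully served, upon which its remaining copies are removed. $N_c(t)$ ($N_c^{UB}(t)$) is the number of type-$c$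 jobs present at time $t$ in the original (UB) system, and $a_{cjs}(t)$ ($a^{UB}_{cjs}(t)$) the service attained at server $s$ by the copy of the $j$th type-$c$ job. Convention: if a job has already departed in the original system but not in the UB system, its attained service at all its servers in the original system is set equal to its size $b_{cj}$. *)

(* Defs.v *)
From HB Require Import structures.
From mathcomp Require Import all_boot all_order all_algebra.
From mathcomp Require Import reals.
Set Implicit Arguments. Unset Strict Implicit. Unset Printing Implicit Defensive.
Import Order.TTheory GRing.Theory Num.Theory.
Local Open Scope ring_scope.

Section Redundancy.
Variables (R : realType) (K : nat).
Variables (mu : 'I_K -> R) (p : {set 'I_K} -> R).

Definition Cset (S' : {set 'I_K}) : {set {set 'I_K}} :=
  [set c | (0 < p c) && (c \subset S')].

Definition load (S' : {set 'I_K}) (s : 'I_K) : R :=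
  \sum_(c in Cset S' | s \in c) p c.

(* L_i = argmax_{s in S_i} mu_s / load; a server with zero load has ratio +oo. *)
Definition Lset (S' : {set 'I_K}) : {set 'I_K} :=
  if [exists s in S', load S' s == 0]
  then [set s in S' | load S' s == 0]
  else [set s in S' | [forall s' in S', mu s' / load S' s' <= mu s / load S' s]].

(* S_0 = S (paper's S_1), S_{i+1} = S_i \ L_i  (= S \ U_{l<=i} L_l) *)
Fixpoint Sset (i : nat) : {set 'I_K} :=
  if i is i'.+1 then Sset i' :\: Lset (Sset i') else setT.

Definition inR (c : {set 'I_K}) (s : 'I_K) : Prop :=
  exists i : nat, [/\ c \in Cset (Sset i), s \in c & s \in Lset (Sset i)].

Definition card_eq (P : nat -> Prop) (n : nat) : Prop :=
  exists l : seq nat, [/\ uniq l, forall j, P j <-> j \in l & size l = n].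

Variables (typ : nat -> {set 'I_K}) (arr : nat -> R) (b : nat -> R).

(* a j s t : service attained at time t at server s by the copy of job j *)
Definition presentO (a : nat -> 'I_K -> R -> R) (j : nat) (t : R) : Prop :=
  arr j <= t /\ forall s, s \in typ j -> a j s t < b j.
Definition activeO (a : nat -> 'I_K -> R -> R) (j : nat) (s : 'I_K) (t : R) :=
  presentO a j t /\ s \in typ j.

Definition presentU (a : nat -> 'I_K -> R -> R) (j : nat) (t : R) : Prop :=
  arr j <= t /\ exists s, [/\ s \in typ j, inR (typ j) s & a j s t < b j].
Definition activeU (a : nat -> 'I_K -> R -> R) (j : nat) (s : 'I_K) (t : R) :=
  [/\ presentU a j t, s \in typ j & a j s t < b j].

Definition ps_rate (active : nat -> 'I_K -> R -> Prop) (j : nat) (s : 'I_K)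
    (t : R) (r : R) : Prop :=
  (active j s t -> forall m, card_eq (fun i => active i s t) m -> r = mu s / m%:R)
  /\ (~ active j s t -> r = 0).

Definition right_deriv (f : R -> R) (t r : R) : Prop :=
  forall e, 0 < e -> exists d, 0 < d /\
    forall h, 0 < h -> h < d -> `|(f (t + h) - f t) / h - r| < e.

Definition cont_from (f : R -> R) (t0 : R) : Prop :=
  forall t, t0 <= t -> forall e, 0 < e -> exists d, 0 < d /\
    forall u, t0 <= u -> `|u - t| < d -> `|f u - f t| < e.

Definition follows (active : (nat -> 'I_K -> R -> R) -> nat -> 'I_K -> R -> Prop)
    (a : nat -> 'I_K -> R -> R) : Prop :=
  forall j s, s \in typ j ->
    [/\ cont_from (a j s) (arr j),
        (forall t, arr j <= t -> exists r, ps_rate (active a) j s t r /\ right_deriv (a j s) t r)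
      & (0 < arr j -> a j s (arr j) = 0)].

End Redundancy.

(* Main.v *)
Require Import Defs.
From HB Require Import structures.
From mathcomp Require Import all_boot all_order all_algebra.
From mathcomp Require Import reals.
From mathcomp Require classical_sets.
From mathcomp Require Import ring lra zify.
From Stdlib Require Import Classical.
Import Order.TTheory GRing.Theory Num.Theory.
Local Open Scope ring_scope.

Lemma real_ind (R : realType) (P : R -> Prop) (x z : R) :
  x <= z -> P x ->
  (forall u, x < u -> u <= z -> (forall v, x <= v -> v < u -> P v) -> P u) ->
  (forall u, x <= u -> u < z -> (forall v, x <= v -> v <= u -> P v) ->
     exists d, 0 < d /\ forall v, u < v -> v < u + d -> v <= z -> P v) ->
  forall v, x <= v -> v <= z -> P v.
Proof.
move=> xz Px Hl Hr.
pose E := fun u => x <= u /\ u <= z /\ forall v, x <= v -> v <= u -> P v.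
have Ex : E x.
  split; first by []. split; first by [].
  move=> v xv vx; have -> : v = x by apply/eqP; rewrite eq_le vx xv. by [].
have hs : classical_sets.has_sup E.
  split; first by exists x.
  exists z => u [_ [uz _]]; exact: uz.
set s := sup E.
have xs : x <= s by apply: sup_upper_bound.
have sz : s <= z.
  have [//|zs] := lerP s z.
  have pz : 0 < s - z by rewrite subr_gt0.
  have [e [_ [ez _]] He] := sup_adherent pz hs.
  exfalso; rewrite -/s in He; lra.
have below : forall v, x <= v -> v < s -> P v.
  move=> v xv vs.
  have pz : 0 < s - v by rewrite subr_gt0.
  have [e [xe [ez He]] He2] := sup_adherent pz hs.
  rewrite -/s in He2; apply: He => //; lra.
have Ps : P s.
  have [xs'|] := ltrP x s; first exact: Hl.
  move=> sx; have -> : s = x by apply/eqP; rewrite eq_le sx xs. by [].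
have upto : forall v, x <= v -> v <= s -> P v.
  move=> v xv; rewrite le_eqVlt => /orP[/eqP -> //|]; exact: below.
have -> : z = s.
  apply/eqP; rewrite eq_le sz andbT; apply/negP => /negP; rewrite -ltNge => lt.
  have [d [d0 Hd]] := Hr s xs lt upto.
  pose w := Order.min (s + d / 2) z.
  have Ew : E w.
    split; first by rewrite /w le_min; apply/andP; split; lra.
    split; first by rewrite /w ge_min lexx orbT.
    move=> v xv vw; have [vs|sv] := lerP v s; first exact: upto.
    apply: Hd => //.
      move: vw; rewrite /w le_min => /andP[]; lra.
    move: vw; rewrite /w le_min => /andP[]; lra.
  have := sup_upper_bound hs Ew; rewrite -/s /w ge_min => /orP[]; lra.
done.
Qed.

Lemma LC (R : realType) (f g : R -> R) x0 w u :
  cont_from f x0 -> cont_from g x0 -> x0 <= w -> w < u ->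
  (forall v, w <= v -> v < u -> f v <= g v) -> f u <= g u.
Proof.
move=> cf cg x0w wu H.
have [//|lt] := lerP (f u) (g u).
exfalso.
have e0 : 0 < (f u - g u) / 2 by apply: divr_gt0; rewrite ?subr_gt0.
have x0u : x0 <= u by apply: le_trans x0w (ltW wu).
have [d1 [d10 H1]] := cf u x0u _ e0.
have [d2 [d20 H2]] := cg u x0u _ e0.
pose v := Order.max w (u - Order.min d1 d2 / 2).
have mn0 : 0 < Order.min d1 d2 by rewrite lt_min d10 d20.
have mn1 : Order.min d1 d2 <= d1 by rewrite ge_min lexx.
have mn2 : Order.min d1 d2 <= d2 by rewrite ge_min lexx orbT.
have wv : w <= v by rewrite /v le_max lexx.
have vu : v < u by rewrite /v gt_max wu /=; lra.
have vd : u - Order.min d1 d2 / 2 <= v by rewrite /v le_max lexx orbT.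
have dist : `|v - u| < Order.min d1 d2.
  rewrite ltr_norml; apply/andP; split; lra.
have := H1 v (le_trans x0w wv) (lt_le_trans dist mn1).
have := H2 v (le_trans x0w wv) (lt_le_trans dist mn2).
have := H v wv vu.
rewrite !ltr_norml => fg /andP[h1 h2] /andP[h3 h4].
lra.
Qed.

Lemma lip_cont (R : realType) (g : R -> R) k x0 :
  0 <= k -> (forall u t, `|g u - g t| <= k * `|u - t|) -> cont_from g x0.
Proof.
move=> k0 Hk t _ e e0.
exists (e / (k + 1)); split; first by apply: divr_gt0 => //; lra.
move=> u _ ut.
apply: le_lt_trans (Hk u t) _.
have k10 : 0 < k + 1 by lra.
have : `|u - t| * (k + 1) < e by rewrite -ltr_pdivlMr.
have := normr_ge0 (u - t).
nra.
Qed.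

Lemma cont_lin (R : realType) (a c x x0 : R) : cont_from (fun v => a + c * (v - x)) x0.
Proof.
apply: (@lip_cont _ _ `|c|) => // u t.
have -> : a + c * (u - x) - (a + c * (t - x)) = c * (u - t) by ring.
by rewrite normrM.
Qed.

Lemma cont_const (R : realType) (a x0 : R) : cont_from (fun _ => a) x0.
Proof. by move=> t _ e e0; exists 1; split => // u _ _; rewrite subrr normr0. Qed.

Lemma eps_le (R : realType) (A B k : R) : 0 <= k ->
  (forall e, 0 < e -> A - e * k <= B) -> A <= B.
Proof.
move=> k0 H.
have [//|lt] := lerP A B; exfalso.
have [k00|kp] := eqVneq k 0.
  have := H 1 ltr01; rewrite k00 mulr0 subr0; lra.
have kpos : 0 < k by rewrite lt_def kp k0.
have e0 : 0 < (A - B) / (2 * k) by apply: divr_gt0; lra.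
have := H _ e0.
have -> : (A - B) / (2 * k) * k = (A - B) / 2.
  by field; lra.
lra.
Qed.

Lemma deriv_ge (R : realType) (f : R -> R) x0 x z c :
  x0 <= x -> x <= z -> cont_from f x0 ->
  (forall u, x <= u -> u < z -> exists r, c <= r /\ right_deriv f u r) ->
  f x + c * (z - x) <= f z.
Proof.
move=> x0x xz cf Hd.
apply: (@eps_le _ _ _ (z - x)); first lra.
move=> e e0.
suff : forall v, x <= v -> v <= z -> f x + (c - e) * (v - x) <= f v.
  move=> /(_ z xz (lexx z)); lra.
apply: real_ind => //.
- by rewrite subrr mulr0 addr0.
- move=> u xu uz H.
  apply: (@LC _ (fun v => f x + (c - e) * (v - x)) f x0 x u) => //.
  exact: cont_lin.
- move=> u xu uz H.
  have [r [cr dr]] := Hd u xu uz.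
  have [d [d0 Hdd]] := dr e e0.
  exists d; split => // v uv vud vz.
  have h0 : 0 < v - u by lra.
  have := Hdd (v - u) h0 (ltac:(lra)).
  have -> : u + (v - u) = v by ring.
  rewrite ltr_norml => /andP[q1 _].
  have q : f v - f u = (f v - f u) / (v - u) * (v - u).
    by rewrite divfK // gt_eqF.
  have := H u xu (lexx u).
  set Q := (f v - f u) / (v - u) in q q1.
  nra.
Qed.

Lemma right_derivN (R : realType) (f : R -> R) t r :
  right_deriv f t r -> right_deriv (fun v => - f v) t (- r).
Proof.
move=> H e e0; have [d [d0 Hd]] := H e e0; exists d; split => // h h0 hd.
have := Hd h h0 hd.
have -> : (- f (t + h) - - f t) / h - - r = - ((f (t + h) - f t) / h - r) by ring.
by rewrite normrN.
Qed.

Lemma cont_fromN (R : realType) (f : R -> R) x0 :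
  cont_from f x0 -> cont_from (fun v => - f v) x0.
Proof.
move=> H t xt e e0; have [d [d0 Hd]] := H t xt e e0; exists d; split => // u xu ut.
have -> : - f u - - f t = - (f u - f t) by ring.
by rewrite normrN; apply: Hd.
Qed.

Lemma deriv_le (R : realType) (f : R -> R) x0 x z c :
  x0 <= x -> x <= z -> cont_from f x0 ->
  (forall u, x <= u -> u < z -> exists r, r <= c /\ right_deriv f u r) ->
  f z <= f x + c * (z - x).
Proof.
move=> x0x xz cf Hd.
have := @deriv_ge R (fun v => - f v) x0 x z (- c) x0x xz (@cont_fromN R f x0 cf).
have K : - f x + - c * (z - x) <= - f z -> f z <= f x + c * (z - x) by lra.
move=> H; apply: K; apply: H => u xu uz.
have [r [rc dr]] := Hd u xu uz.
exists (- r); split; first lra.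
exact: right_derivN.
Qed.
Lemma card_exists (P : nat -> Prop) n :
  (forall j, P j -> (j < n)%N) -> exists m, card_eq P m.
Proof.
move=> Hn.
suff [l [ul Hl]] : exists l : seq nat, uniq l /\ forall j, (P j /\ (j < n)%N) <-> j \in l.
  exists (size l), l; split => // j; rewrite -Hl; split => [Pj|[]//]; split => //; exact: Hn.
elim: n {Hn} => [|n [l [ul Hl]]].
  by exists [::]; split => // j; split => [[]//|].
have [Pn|nPn] := classic (P n).
  exists (n :: l); split.
    rewrite /= ul andbT; apply/negP => /Hl [_]; by rewrite ltnn.
  move=> j; rewrite in_cons ltnS leq_eqVlt; split.
    case=> Pj /orP[->//|jn]; apply/orP; right; apply/Hl; by split.
  case/orP => [/eqP->|/Hl [Pj ->]]; [by rewrite eqxx | by rewrite orbT].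
exists l; split => // j; rewrite -(Hl j) ltnS leq_eqVlt; split.
  case=> Pj /orP[/eqP jn|//]; by subst.
by case=> Pj ->; rewrite orbT.
Qed.

Lemma card_mono (P Q : nat -> Prop) m m' :
  (forall j, P j -> Q j) -> card_eq P m -> card_eq Q m' -> (m <= m')%N.
Proof.
move=> PQ [l [ul Hl <-]] [l' [ul' Hl' <-]].
apply: uniq_leq_size => // j /Hl /PQ /Hl'; done.
Qed.

Lemma card_ext (P Q : nat -> Prop) m :
  (forall j, P j <-> Q j) -> card_eq P m -> card_eq Q m.
Proof.
move=> PQ [l [ul Hl <-]]; exists l; split => // j; rewrite -PQ; exact: Hl.
Qed.

Lemma card_pos (P : nat -> Prop) j m : P j -> card_eq P m -> (0 < m)%N.
Proof.
move=> Pj [l [ul Hl <-]]; move/Hl: Pj; by case: l {ul Hl}.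
Qed.

Lemma fin_delta (R : realType) (T : eqType) (l : seq T) (Q : T -> R -> Prop) :
  (forall x d d', 0 < d' -> d' <= d -> Q x d -> Q x d') ->
  (forall x, x \in l -> exists d, 0 < d /\ Q x d) ->
  exists d, 0 < d /\ forall x, x \in l -> Q x d.
Proof.
move=> mono; elim: l => [|y l IH] H.
  by exists 1; split => //.
have [d1 [d10 H1]] := H y (mem_head _ _).
have [d2 [d20 H2]] : exists d, 0 < d /\ (forall x, x \in l -> Q x d).
  by apply: IH => x xl; apply: H; rewrite in_cons xl orbT.
exists (Order.min d1 d2); split; first by rewrite lt_min d10 d20.
move=> x; rewrite in_cons => /orP[/eqP->|xl].
  by apply: mono H1; rewrite ?lt_min ?d10 ?d20 // ge_min lexx.
by apply: (mono x d2); rewrite ?lt_min ?d10 ?d20 ?ge_min ?lexx ?orbT //; apply: H2.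
Qed.
Lemma Lset_sub {R : realType} {K : nat} (mu : 'I_K -> R) p (S' : {set 'I_K}) : Lset mu p S' \subset S'.
Proof.
rewrite /Lset; case: ifP => _; by rewrite setIdE subsetIl.
Qed.
Lemma dummy : True. Proof. by []. 
Qed.

Lemma Lset_nonempty {R : realType} {K : nat} (mu : 'I_K -> R) p (S' : {set 'I_K}) x0 :
  x0 \in S' -> exists s, s \in Lset mu p S'.
Proof.
move=> x0S; rewrite /Lset; case: ifP.
  case/existsP => s /andP[sS /eqP l0]; exists s; by rewrite inE sS l0 eqxx.
move=> _.
have [i Si Hi] := @arg_maxP _ R _ x0 (mem S') (fun s => mu s / load p S' s) x0S.
exists i; rewrite inE; apply/andP; split; first exact: Si.
apply/forallP => s'; apply/implyP => s'S.
exact: Hi.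
Qed.

Lemma Sset_card {R : realType} {K : nat} (mu : 'I_K -> R) p i : (#|Sset mu p i| <= K - i)%N.
Proof.
elim: i => [|i IH] /=; first by rewrite cardsT card_ord subn0.
have [E|[x xS]] := set_0Vmem (Sset mu p i).
  by rewrite E finset.set0D cards0.
  have [s sL] := Lset_nonempty mu p _ _ xS.
  have sS : s \in Sset mu p i by exact: (subsetP (Lset_sub mu p (Sset mu p i)) s sL).
  have : (#|Sset mu p i :\: Lset mu p (Sset mu p i)| < #|Sset mu p i|)%N.
    apply: proper_card; apply/properP; split; first exact: subsetDl.
    by exists s => //; rewrite inE sL.
  move=> H; move: (leq_trans H IH); rewrite subnS; case: (K - i)%N => // n.
Qed.

Lemma inR_exists {R : realType} {K : nat} (mu : 'I_K -> R) p (c : {set 'I_K}) :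
  0 < p c -> c != set0 -> exists s, s \in c /\ inR mu p c s.
Proof.
move=> pc cn.
apply: NNPP => Hn.
have all : forall i, c \subset Sset mu p i.
  elim=> [|i IH] /=; first exact: subsetT.
  apply/subsetP => s sc; rewrite inE (subsetP IH s sc) andbT.
  apply/negP => sL; apply: Hn; exists s; split => //; exists i; split => //.
  by rewrite inE pc IH.
have := Sset_card mu p K; rewrite subnn leqn0 cards_eq0 => /eqP E.
case/set0Pn: cn => s sc.
by have := subsetP (all K) s sc; rewrite E inE.
Qed.
Lemma rate_ge0 {R : realType} {K : nat} (mu : 'I_K -> R) (A : nat -> 'I_K -> R -> Prop)
  j s t r n :
  (forall s, 0 < mu s) -> (forall i, A i s t -> (i < n)%N) -> ps_rate mu A j s t r -> 0 <= r.
Proof.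
move=> mu0 Hn [H1 H2].
have [a|na] := classic (A j s t); last by rewrite (H2 na).
have [m cm] := card_exists _ _ Hn.
rewrite (H1 a m cm); apply: divr_ge0; [exact: ltW | exact: ler0n].
Qed.

Lemma rate_eq {R : realType} {K : nat} (mu : 'I_K -> R) (A : nat -> 'I_K -> R -> Prop)
  j s u w r r' n :
  (forall i, A i s w <-> A i s u) -> (forall i, A i s u -> (i < n)%N) ->
  ps_rate mu A j s w r -> ps_rate mu A j s u r' -> r = r'.
Proof.
move=> E Hn [H1 H2] [H1' H2'].
have [a|na] := classic (A j s u).
  have [m cm] := card_exists _ _ Hn.
  have cm' : card_eq (fun i => A i s w) m by apply: card_ext cm => i; rewrite E.
  by rewrite (H1 (proj2 (E j) a) m cm') (H1' a m cm).
have na' : ~ A j s w by move/E.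
by rewrite (H2 na') (H2' na).
Qed.


Lemma mono_follows {R : realType} {K : nat} (mu : 'I_K -> R) typ (arr : nat -> R)
  (act : (nat -> 'I_K -> R -> R) -> nat -> 'I_K -> R -> Prop) a j s v w :
  follows mu typ arr act a -> (forall s, 0 < mu s) ->
  (forall t, exists n, forall i, arr i <= t -> (i < n)%N) ->
  (forall i s t, act a i s t -> arr i <= t) ->
  s \in typ j -> arr j <= v -> v <= w -> a j s v <= a j s w.
Proof.
move=> fa mu0 hfin harr sj av vw.
have [ca Hd _] := fa j s sj.
have := @deriv_ge R (a j s) (arr j) v w 0 av vw ca.
rewrite mul0r addr0; apply => x vx xw.
have [r [pr dr]] := Hd x (le_trans av vx).
exists r; split => //.
have [n Hn] := hfin x.
apply: (@rate_ge0 R K mu _ j s x r n mu0 _ pr) => i /harr; exact: Hn.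
Qed.

Lemma lin_follows {R : realType} {K : nat} (mu : 'I_K -> R) typ (arr : nat -> R)
  (act : (nat -> 'I_K -> R -> R) -> nat -> 'I_K -> R -> Prop) a j s u v n :
  follows mu typ arr act a ->
  s \in typ j -> arr j <= u -> u <= v ->
  (forall w, u <= w -> w < v -> forall i, act a i s w <-> act a i s u) ->
  (forall i, act a i s u -> (i < n)%N) ->
  exists r, ps_rate mu (act a) j s u r /\ a j s v = a j s u + r * (v - u).
Proof.
move=> fa sj au uv E Hn.
have [ca Hd _] := fa j s sj.
have [r [pr dr]] := Hd u au.
exists r; split => //.
have D : forall x, u <= x -> x < v -> right_deriv (a j s) x r.
  move=> x ux xv.
  have [r' [pr' dr']] := Hd x (le_trans au ux).
  by rewrite -(@rate_eq R K mu (act a) j s u x r' r n (E x ux xv) Hn pr' pr).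
apply/eqP; rewrite eq_le; apply/andP; split.
  apply: (@deriv_le R (a j s) (arr j) u v r au uv ca) => x ux xv.
  by exists r; split => //; apply: D.
apply: (@deriv_ge R (a j s) (arr j) u v r au uv ca) => x ux xv.
by exists r; split => //; apply: D.
Qed.

Lemma cont_keep {R : realType} (f : R -> R) x0 u B :
  cont_from f x0 -> x0 <= u -> f u < B ->
  exists d, 0 < d /\ forall v, u <= v -> v < u + d -> f v < B.
Proof.
move=> cf x0u fu.
have e0 : 0 < B - f u by rewrite subr_gt0.
have [d [d0 Hd]] := cf u x0u _ e0.
exists d; split => // v uv vd.
have : `|v - u| < d by rewrite ger0_norm; lra.
move=> /(Hd v (le_trans x0u uv)); rewrite ltr_norml => /andP[_]; lra.
Qed.

Lemma ex_min2 {R : realType} (P Q : R -> Prop) :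
  (forall d d', 0 < d' -> d' <= d -> P d -> P d') ->
  (forall d d', 0 < d' -> d' <= d -> Q d -> Q d') ->
  (exists d, 0 < d /\ P d) -> (exists d, 0 < d /\ Q d) ->
  exists d, 0 < d /\ P d /\ Q d.
Proof.
move=> mP mQ [d1 [d10 P1]] [d2 [d20 Q2]].
have m0 : 0 < Order.min d1 d2 by rewrite lt_min d10 d20.
exists (Order.min d1 d2); split => //; split.
  by apply: (mP d1) => //; rewrite ge_min lexx.
by apply: (mQ d2) => //; rewrite ge_min lexx orbT.
Qed.
Theorem proposition3 (R : realType) (K : nat) (mu : 'I_K -> R) (p : {set 'I_K} -> R)
    (typ : nat -> {set 'I_K}) (arr : nat -> R) (b : nat -> R)
    (aO aU : nat -> 'I_K -> R -> R) :
  (* model parameters *)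
  (forall s, 0 < mu s) ->
  (forall c, 0 <= p c) -> \sum_(c : {set 'I_K}) p c = 1 -> p set0 = 0 ->
  (* coupled arrival instants, types and sizes (shared by both systems) *)
  (forall j, 0 <= arr j) -> (forall j, 0 < p (typ j)) -> (forall j, 0 < b j) ->
  (forall t, exists n, forall j, arr j <= t -> (j < n)%N) ->
  (* aO follows the original redundancy dynamics, aU the UB dynamics *)
  follows mu typ arr (activeO typ arr b) aO ->
  follows mu typ arr (activeU mu p typ arr b) aU ->
  (* equal initial conditions *)
  (forall j s, arr j = 0 -> s \in typ j ->
     0 <= aO j s 0 <= b j /\ aO j s 0 = aU j s 0) ->
  (forall c, exists n,
     card_eq (fun j => typ j = c /\ presentO typ arr b aO j 0) n /\
     card_eq (fun j => typ j = c /\ presentU mu p typ arr b aU j 0) n) ->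
  forall t, 0 <= t ->
    (forall c nO nU,
       card_eq (fun j => typ j = c /\ presentO typ arr b aO j t) nO ->
       card_eq (fun j => typ j = c /\ presentU mu p typ arr b aU j t) nU ->
       (nO <= nU)%N) /\
    (forall j s, s \in typ j -> arr j <= t ->
       (presentO typ arr b aO j t -> aU j s t <= aO j s t) /\
       (~ presentO typ arr b aO j t -> aU j s t <= b j)).
Proof.
move=> mu0 p0 psum pset0 arr0 ptyp b0 hfin fO fU init0 card0 T T0.
pose Inv := fun t => forall j s, s \in typ j -> arr j <= t ->
   (presentO typ arr b aO j t -> aU j s t <= aO j s t) /\ aU j s t <= b j.
have hR : forall j, exists s, s \in typ j /\ inR mu p (typ j) s.
  move=> j; apply: inR_exists => //; apply/eqP => E.
  by have := ptyp j; rewrite E pset0 ltxx.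
have OU_pres : forall t j, Inv t -> presentO typ arr b aO j t ->
    presentU mu p typ arr b aU j t.
  move=> t j I [aj H]; split => //; have [s0 [s0j R0]] := hR j; exists s0; split => //.
  have [I1 _] := I j s0 s0j aj; exact: le_lt_trans (I1 (conj aj H)) (H s0 s0j).
have OU_act : forall t i s, Inv t -> activeO typ arr b aO i s t ->
    activeU mu p typ arr b aU i s t.
  move=> t i s I [pr si]; split => //; first exact: OU_pres pr.
  have [I1 _] := I i s si pr.1; exact: le_lt_trans (I1 pr) (pr.2 s si).
have harrO : forall i s t, activeO typ arr b aO i s t -> arr i <= t by move=> i s t [[]].
have harrU : forall i s t, activeU mu p typ arr b aU i s t -> arr i <= t
  by move=> i s t [[]].
have monoO := fun j s v w => @mono_follows R K mu typ arr (activeO typ arr b) aO j s v w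
  fO mu0 hfin harrO.
have monoU := fun j s v w => @mono_follows R K mu typ arr (activeU mu p typ arr b) aU j s v w
  fU mu0 hfin harrU.
have main : forall v, 0 <= v -> v <= T -> Inv v.
  apply: real_ind => //.
  - move=> j s sj aj.
    have aj0 : arr j = 0 by have := arr0 j; lra.
    have [/andP[a0 ab] e] := init0 j s aj0 sj.
    by rewrite -e; split.
  - move=> u u0 uT IH j s sj aju.
    have [cO _ zO] := fO j s sj; have [cU _ zU] := fU j s sj.
    have [ltj|eqj] : arr j < u \/ arr j = u.
      by move: aju; rewrite le_eqVlt => /orP[/eqP->|->]; [right|left].
    + split.
      * move=> [_ Hp].
        apply: (@LC R (aU j s) (aO j s) (arr j) (arr j) u cU cO (lexx _) ltj) => v av vu.
        have Iv := IH v (le_trans (arr0 j) av) vu.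
        have pv : presentO typ arr b aO j v.
          split => // s' s'j; apply: le_lt_trans (Hp s' s'j).
          by apply: monoO => //; exact: ltW.
        exact: (Iv j s sj av).1 pv.
      * refine (@LC R (aU j s) (fun _ => b j) (arr j) (arr j) u cU (cont_const _ _ _) (lexx _) ltj _).
        move=> v av vu; exact: (IH v (le_trans (arr0 j) av) vu j s sj av).2.
    + have aj0 : 0 < arr j by rewrite eqj.
      rewrite -eqj (zO aj0) (zU aj0); split => //; exact: ltW.
  - move=> u u0 uT IH.
    have Iu := IH u u0 (lexx u).
    have [n Hn] := hfin (u + 1).
    pose Qs (j : nat) (s : 'I_K) (d : R) := s \in typ j -> arr j <= u ->
      (aO j s u < b j -> forall v, u <= v -> v < u + d -> aO j s v < b j) /\
      (aU j s u < b j -> forall v, u <= v -> v < u + d -> aU j s v < b j).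
    pose Qa (j : nat) (d : R) := d <= 1 /\ (arr j <= u \/ u + d <= arr j).
    pose Qo (j : nat) (o : option 'I_K) (d : R) :=
      match o with None => Qa j d | Some s => Qs j s d end.
    have monoQo : forall j o d d', 0 < d' -> d' <= d -> Qo j o d -> Qo j o d'.
      move=> j [s|] d d' d0 dd /=.
      - move=> H sj aj; have [H1 H2] := H sj aj.
        split => [h v uv vd|h v uv vd]; [apply: H1 | apply: H2] => //; lra.
      - case=> d1 [a|a]; split; [lra | by left | lra | right; lra].
    have exQo : forall j o, exists d, 0 < d /\ Qo j o d.
      move=> j [s|] /=.
      - case: (boolP ((s \in typ j) && (arr j <= u))) => [/andP[sj aj]|nh]; last first.
          exists 1; split => // sj aj; exfalso; move: nh; by rewrite sj aj.
        have [cO _ _] := fO j s sj; have [cU _ _] := fU j s sj.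
        have PO : exists d, 0 < d /\
            (aO j s u < b j -> forall v, u <= v -> v < u + d -> aO j s v < b j).
          case: (boolP (aO j s u < b j)) => h; last by exists 1; split => //; rewrite (negbTE h).
          by have [d [d0 Hd]] := @cont_keep R (aO j s) (arr j) u (b j) cO aj h; exists d; split => // _.
        have PU : exists d, 0 < d /\
            (aU j s u < b j -> forall v, u <= v -> v < u + d -> aU j s v < b j).
          case: (boolP (aU j s u < b j)) => h; last by exists 1; split => //; rewrite (negbTE h).
          by have [d [d0 Hd]] := @cont_keep R (aU j s) (arr j) u (b j) cU aj h; exists d; split => // _.
        have [d [d0 [H1 H2]]] : exists d, 0 < d /\
          (aO j s u < b j -> forall v, u <= v -> v < u + d -> aO j s v < b j) /\
          (aU j s u < b j -> forall v, u <= v -> v < u + d -> aU j s v < b j).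
          apply: (ex_min2 _ _ _ _ PO PU).
          + move=> d d' d0 dd H h v uv vd; apply: H => //; lra.
          + move=> d d' d0 dd H h v uv vd; apply: H => //; lra.
        by exists d; split => // _ _; split.
      - case: (lerP (arr j) u) => h.
          by exists 1; split => //; split => //; left.
        exists (Order.min 1 (arr j - u)); split.
          by rewrite lt_min ltr01 subr_gt0.
        split; first by rewrite ge_min lexx.
        right; have : Order.min 1 (arr j - u) <= arr j - u by rewrite ge_min lexx orbT.
        lra.
    pose L := None :: map Some (enum 'I_K).
    have inL : forall o, o \in L.
      case=> [s|]; last exact: mem_head.
      by rewrite /L in_cons /= (mem_map (@Some_inj _)) mem_enum.
    have exQj : forall j, exists d, 0 < d /\ forall o, Qo j o d.
      move=> j.
      have [d [d0 Hd]] := @fin_delta R _ L (Qo j) (monoQo j) (fun o _ => exQo j o).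
      by exists d; split => // o; apply: Hd.
    have [d [d0 Hd]] := @fin_delta R _ (iota 0 n) (fun j d => forall o, Qo j o d)
      (fun j d d' d0 dd H o => monoQo j o d d' d0 dd (H o)) (fun j _ => exQj j).
    have Hd2 : forall j, (j < n)%N -> forall o, Qo j o d.
      by move=> j jn; apply: Hd; rewrite mem_iota.
    have [d' [d'0 [Hd' d1]]] := ex_min2 (fun d => forall j, (j < n)%N -> forall o, Qo j o d)
        (fun d => d <= 1)
        (fun e e' e0 ee H j jn o => monoQo j o e e' e0 ee (H j jn o))
        (fun e e' e0 ee H => le_trans ee H)
        (ex_intro _ d (conj d0 Hd2)) (ex_intro _ 1 (conj ltr01 (lexx 1))).
    clear d d0 Hd Hd2; rename d' into d; rename d'0 into d0; rename Hd' into Hd.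
    have F1 : forall w, u <= w -> w < u + d -> forall i, (arr i <= w <-> arr i <= u).
      move=> w uw wd i; split => [aw|au]; last exact: le_trans au uw.
      case: (ltnP i n) => [iN|iN].
        have [_ [//|h]] := Hd i iN None; lra.
      have : (i < n)%N by apply: Hn; lra.
      by rewrite ltnNge iN.
    have F2O : forall w, u <= w -> w < u + d -> forall i s, s \in typ i -> arr i <= u ->
        (aO i s w < b i <-> aO i s u < b i).
      move=> w uw wd i s si ai; split => h.
        exact: le_lt_trans (monoO i s u w si ai uw) h.
      have iN : (i < n)%N by apply: Hn; lra.
      exact: ((Hd i iN (Some s)) si ai).1 h w uw wd.
    have F2U : forall w, u <= w -> w < u + d -> forall i s, s \in typ i -> arr i <= u ->
        (aU i s w < b i <-> aU i s u < b i).
      move=> w uw wd i s si ai; split => h.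
        exact: le_lt_trans (monoU i s u w si ai uw) h.
      have iN : (i < n)%N by apply: Hn; lra.
      exact: ((Hd i iN (Some s)) si ai).2 h w uw wd.
    have F3O : forall w, u <= w -> w < u + d -> forall i,
        (presentO typ arr b aO i w <-> presentO typ arr b aO i u).
      move=> w uw wd i; split.
        move=> [aw H]; have ai := (F1 w uw wd i).1 aw.
        by split => // s si; apply/(F2O w uw wd i s si ai)/H.
      move=> [ai H]; split; first exact: le_trans ai uw.
      by move=> s si; apply/(F2O w uw wd i s si ai)/H.
    have F3U : forall w, u <= w -> w < u + d -> forall i,
        (presentU mu p typ arr b aU i w <-> presentU mu p typ arr b aU i u).
      move=> w uw wd i; split.
        move=> [aw [s [si Rs H]]]; have ai := (F1 w uw wd i).1 aw.
        by split => //; exists s; split => //; apply/(F2U w uw wd i s si ai).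
      move=> [ai [s [si Rs H]]]; split; first exact: le_trans ai uw.
      by exists s; split => //; apply/(F2U w uw wd i s si ai).
    have F4O : forall w, u <= w -> w < u + d -> forall i s,
        (activeO typ arr b aO i s w <-> activeO typ arr b aO i s u).
      move=> w uw wd i s; split => [[pr si]|[pr si]]; split => //; by apply/(F3O w uw wd i).
    have F4U : forall w, u <= w -> w < u + d -> forall i s,
        (activeU mu p typ arr b aU i s w <-> activeU mu p typ arr b aU i s u).
      move=> w uw wd i s; split => [[pr si h]|[pr si h]].
        have pu := (F3U w uw wd i).1 pr.
        by split => //; apply/(F2U w uw wd i s si pu.1).
      split => //; first by apply/(F3U w uw wd i).
      by apply/(F2U w uw wd i s si pr.1).
    exists d; split => // v uv vd vT j s sj av.
    have uv' := ltW uv.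
    have au := (F1 v uv' vd j).1 av.
    have HnO : forall i, activeO typ arr b aO i s u -> (i < n)%N.
      by move=> i /harrO h; apply: Hn; lra.
    have HnU : forall i, activeU mu p typ arr b aU i s u -> (i < n)%N.
      by move=> i /harrU h; apply: Hn; lra.
    have EO : forall w, u <= w -> w < v -> forall i,
        activeO typ arr b aO i s w <-> activeO typ arr b aO i s u.
      move=> w uw wv i; apply: F4O => //; lra.
    have EU : forall w, u <= w -> w < v -> forall i,
        activeU mu p typ arr b aU i s w <-> activeU mu p typ arr b aU i s u.
      move=> w uw wv i; apply: F4U => //; lra.
    have [rO [prO eO]] := @lin_follows R K mu typ arr _ aO j s u v n fO sj au uv' EO HnO.
    have [rU [prU eU]] := @lin_follows R K mu typ arr _ aU j s u v n fU sj au uv' EU HnU.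
    have [I1 I2] := Iu j s sj au.
    split.
    + move=> pv; have pu := (F3O v uv' vd j).1 pv.
      have aOu : activeO typ arr b aO j s u := conj pu sj.
      have aUu := OU_act u j s Iu aOu.
      have [mO cO] := card_exists _ _ HnO.
      have [mU cU] := card_exists _ _ HnU.
      have rOe := prO.1 aOu mO cO.
      have rUe := prU.1 aUu mU cU.
      have mOmU := @card_mono _ _ mO mU (fun i => OU_act u i s Iu) cO cU.
      have mO0 := @card_pos _ j mO aOu cO.
      have rle : rU <= rO.
        rewrite rOe rUe; apply: ler_wpM2l; first exact: ltW.
        rewrite lef_pV2 ?ler_nat // ?posrE ltr0n //; exact: leq_trans mO0 mOmU.
      have vu0 : 0 <= v - u by lra.
      rewrite eO eU; apply: lerD (I1 pu) _; exact: ler_wpM2r.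
    + case: (ltrP (aU j s u) (b j)) => h.
        exact: ltW ((F2U v uv' vd j s sj au).2 h).
      have naU : ~ activeU mu p typ arr b aU j s u by move=> [_ _ h']; lra.
      by rewrite eU (prU.2 naU) mul0r addr0.
have IT := main T T0 (lexx T).
split.
  move=> c nO nU cO cU; apply: card_mono cO cU => j [tj pj]; split => //.
  exact: OU_pres IT pj.
move=> j s sj aj; have [I1 I2] := IT j s sj aj; split => // _.
Qed.
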